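(* Let $p\ge 1$ be an integer and let $0<u\le v$ be real numbers with $uv=1$. Let $\mathcal{C}=\{A\in\mathbb{S}_{++}^p : uI_p\preceq A\preceq vI_p\}$. Then for every $\Omega_r\in\mathcal{C}$, \[ \mathcal{N}_{\mathcal{C}}(\Omega_r) = -\mathcal{N}_{\mathcal{C}}(\Omega_r^{-1}), \] where for $A\in\mathcal{C}$ the normal cone is $\mathcal{N}_{\mathcal{C}}(A)=\{B\in\mathbb{S}^p : \operatorname{tr}(B^T(Z-A))\le 0 \text{ for all } Z\in\mathcal{C}\}$.
   Context: $\mathbb{S}^p$ denotes the set of real symmetric $p\times p$ matrices, $\mathbb{S}_{++}^p$ the set of real symmetric positive definite $p\times p$ matrices, and $\preceq$ the Loewner order ($A\preceq B$ iff $B-A$ is positive semidefinite). For a set $S$ of matrices, $-S=\{-B : B\in S\}$. Note that $\Omega_r\in\mathcal{C}$ implies $\Omega_r^{-1}\in\mathcal{C}$ since $uv=1$. *)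

(* Defs.v *)
From mathcomp Require Import all_boot all_order all_algebra.
Set Implicit Arguments. Unset Strict Implicit. Unset Printing Implicit Defensive.
Import Order.TTheory GRing.Theory Num.Theory.
Local Open Scope ring_scope.

Definition symmetric (R : ringType) (p : nat) (A : 'M[R]_p) : Prop := A^T = A.

Definition psd (R : realFieldType) (p : nat) (A : 'M[R]_p) : Prop :=
  symmetric A /\ forall x : 'cV[R]_p, 0 <= (x^T *m A *m x) 0 0.

Definition pd (R : realFieldType) (p : nat) (A : 'M[R]_p) : Prop :=
  symmetric A /\ forall x : 'cV[R]_p, x != 0 -> 0 < (x^T *m A *m x) 0 0.

Definition loewner_le (R : realFieldType) (p : nat) (A B : 'M[R]_p) : Prop :=
  psd (B - A).

Definition Cset (R : realFieldType) (p : nat) (u v : R) (A : 'M[R]_p) : Prop :=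
  pd A /\ loewner_le (u%:M) A /\ loewner_le A (v%:M).

Definition normal_cone (R : realFieldType) (p : nat) (S : 'M[R]_p -> Prop)
  (A : 'M[R]_p) (B : 'M[R]_p) : Prop :=
  symmetric B /\ forall Z, S Z -> \tr (B^T *m (Z - A)) <= 0.

(* Main.v *)
Require Import Defs.
From mathcomp Require Import all_boot all_order all_algebra.
From mathcomp Require Import ring lra.
Set Implicit Arguments. Unset Strict Implicit. Unset Printing Implicit Defensive.
Import Order.TTheory GRing.Theory Num.Theory.
Local Open Scope ring_scope.


Definition qf (R : realFieldType) n (M : 'M[R]_n) (x : 'cV[R]_n) : R :=
  (x^T *m M *m x) 0 0.

Lemma qfD (R : realFieldType) n (M N : 'M[R]_n) x : qf (M + N) x = qf M x + qf N x.
Proof. by rewrite /qf mulmxDr mulmxDl mxE. Qed.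
Lemma qfN (R : realFieldType) n (M : 'M[R]_n) x : qf (- M) x = - qf M x.
Proof. by rewrite /qf mulmxN mulNmx mxE. Qed.
Lemma qfB (R : realFieldType) n (M N : 'M[R]_n) x : qf (M - N) x = qf M x - qf N x.
Proof. by rewrite qfD qfN. Qed.
Lemma qfZ (R : realFieldType) n a (M : 'M[R]_n) x : qf (a *: M) x = a * qf M x.
Proof. by rewrite /qf -scalemxAr -scalemxAl mxE. Qed.
Lemma qfS (R : realFieldType) n a (x : 'cV[R]_n) : qf (a%:M) x = a * qf 1%:M x.
Proof. by rewrite -qfZ scale_scalar_mx mulr1. Qed.
Lemma qf_cong (R : realFieldType) n (G M : 'M[R]_n) x :
  qf (G^T *m M *m G) x = qf M (G *m x).
Proof. by rewrite /qf trmx_mul !mulmxA. Qed.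
Lemma qf1_ge0 (R : realFieldType) n (x : 'cV[R]_n) : 0 <= qf 1%:M x.
Proof.
rewrite /qf mulmx1 mxE; apply: sumr_ge0 => i _; rewrite mxE -expr2; exact: sqr_ge0.
Qed.

Lemma h_sym (R : realFieldType) n (O : 'M[R]_n.+1) : O^T = O ->
  forall g, (horner_mx O g)^T = horner_mx O g.
Proof.
move=> sO; elim/poly_ind => [|g c IH]; first by rewrite rmorph0 trmx0.
have hc : horner_mx O (g * 'X) = horner_mx O ('X * g) by rewrite mulrC.
rewrite rmorphD /= hc !rmorphM /= horner_mx_X horner_mx_C linearD /= tr_scalar_mx.
rewrite -mulmxE trmx_mul IH sO; congr (_ + _).
by move: hc; rewrite !rmorphM /= horner_mx_X -!mulmxE.
Qed.

Definition K (R : realFieldType) n (O : 'M[R]_n.+1) (f : {poly R}) :=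
  forall x, 0 <= qf (horner_mx O f) x.

Lemma K_add (R : realFieldType) n (O : 'M[R]_n.+1) f g : K O f -> K O g -> K O (f + g).
Proof. by move=> Kf Kg x; rewrite rmorphD /= qfD addr_ge0. Qed.
Lemma K_scale (R : realFieldType) n (O : 'M[R]_n.+1) a f : 0 <= a -> K O f -> K O (a%:P * f).
Proof.
by move=> a0 Kf x; rewrite rmorphM /= horner_mx_C -mulmxE mul_scalar_mx qfZ mulr_ge0.
Qed.
Lemma K_cong (R : realFieldType) n (O : 'M[R]_n.+1) g f : O^T = O -> K O f -> K O (g * f * g).
Proof.
move=> sO Kf x; rewrite !rmorphM /= -!mulmxE -{1}(h_sym sO g) qf_cong; exact: Kf.
Qed.
Lemma K_one (R : realFieldType) n (O : 'M[R]_n.+1) : K O 1.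
Proof. by move=> x; rewrite rmorph1 /=; exact: qf1_ge0. Qed.


Lemma entryD (R : realFieldType) m n (M N : 'M[R]_(m,n)) i j : (M + N) i j = M i j + N i j.
Proof. by rewrite mxE. Qed.

Lemma qf_split (R : realFieldType) n (A : 'M[R]_n) x : A^T = A ->
  qf A (x + A *m x) = qf A x + qf A (A *m x) + 2 * qf (A *m A) x.
Proof.
move=> sA; rewrite /qf [(x + _)^T]linearD /= !mulmxDl !mulmxDr !entryD trmx_mul sA !mulmxA.
ring.
Qed.

Lemma KP (R : realFieldType) n (O : 'M[R]_n.+1) (u v : R) : O^T = O -> u <= v ->
  K O ('X - u%:P) -> K O (v%:P - 'X) -> K O (('X - u%:P) * (v%:P - 'X)).
Proof.
move=> sO uv K1 K2; case: (eqVneq u v) => [euv|nuv].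
  rewrite -euv in K2 *.
  set A := horner_mx O ('X - u%:P).
  have sA : A^T = A := h_sym sO _.
  have A0 : forall y, qf A y = 0.
    move=> y; apply/eqP; rewrite eq_le K1 andbT.
    by have := K2 y; rewrite -opprB rmorphN /= qfN oppr_ge0.
  move=> x; have -> : u%:P - 'X = -('X - u%:P) by rewrite opprB.
  rewrite mulrN rmorphN rmorphM /= qfN oppr_ge0 -/A -mulmxE.
  have := qf_split x sA; rewrite !A0 !add0r => /esym/eqP.
  by rewrite mulf_eq0 pnatr_eq0 orFb => /eqP ->.
have ltuv : 0 < v - u by rewrite subr_gt0 lt_neqAle nuv.
have KK : K O ((v - u)%:P * (('X - u%:P) * (v%:P - 'X))).
  have -> : (v - u)%:P * (('X - u%:P) * (v%:P - 'X)) =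
     ('X - u%:P) * (v%:P - 'X) * ('X - u%:P) + (v%:P - 'X) * ('X - u%:P) * (v%:P - 'X).
    by ring.
  by apply: K_add; apply: K_cong.
move=> x; have := KK x.
by rewrite rmorphM /= horner_mx_C -mulmxE mul_scalar_mx qfZ pmulr_rge0.
Qed.

Lemma unitO (R : realFieldType) n (O : 'M[R]_n) : pd O -> O \in unitmx.
Proof.
move=> [_ pO]; rewrite unitmxE unitfE; apply/negP => /det0P [w w0 wO].
have : w^T != 0 by rewrite trmx_eq0.
move/pO; by rewrite trmxK wO mul0mx mxE ltxx.
Qed.


Definition E (R : realFieldType) n (O : 'M[R]_n.+1) (a : R) (g : {poly R}) :=
  a *: invmx O + horner_mx O g.

Lemma E_add (R : realFieldType) (n : nat) (O : 'M[R]_n.+1) a g b k : E O a g + E O b k = E O (a + b) (g + k).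
Proof. by rewrite /E rmorphD /= scalerDl addrACA. Qed.
Lemma E_opp (R : realFieldType) (n : nat) (O : 'M[R]_n.+1) a g : - E O a g = E O (- a) (- g).
Proof. by rewrite /E rmorphN /= scaleNr opprD. Qed.
Lemma E_sub (R : realFieldType) (n : nat) (O : 'M[R]_n.+1) a g b k : E O a g - E O b k = E O (a - b) (g - k).
Proof. by rewrite E_opp E_add. Qed.
Lemma E_scale (R : realFieldType) (n : nat) (O : 'M[R]_n.+1) r a g : r *: E O a g = E O (r * a) (r%:P * g).
Proof. by rewrite /E scalerDr scalerA rmorphM /= horner_mx_C -mulmxE mul_scalar_mx. Qed.
Lemma E_c (R : realFieldType) (n : nat) (O : 'M[R]_n.+1) c : c%:M = E O 0 c%:P.
Proof. by rewrite /E scale0r add0r horner_mx_C. Qed.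
Lemma E_sym (R : realFieldType) (n : nat) (O : 'M[R]_n.+1) a g : O^T = O -> (E O a g)^T = E O a g.
Proof. by move=> sO; rewrite /E linearD /= linearZ /= trmx_inv sO h_sym. Qed.
Lemma E_conj (R : realFieldType) (n : nat) (O : 'M[R]_n.+1) a g : O^T = O -> O \in unitmx ->
  K O (a%:P * 'X + 'X * g * 'X) -> forall x, 0 <= qf (E O a g) x.
Proof.
move=> sO uO KK x.
have -> : x = O *m (invmx O *m x) by rewrite mulmxA mulmxV // mul1mx.
rewrite -qf_cong sO.
have -> : O *m E O a g *m O = horner_mx O (a%:P * 'X + 'X * g * 'X).
  rewrite /E mulmxDr mulmxDl -scalemxAr -scalemxAl mulmxV // mul1mx.
  by rewrite rmorphD !rmorphM /= horner_mx_C horner_mx_X -!mulmxE mul_scalar_mx.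
exact: KK.
Qed.

Lemma inC (R : realFieldType) n (u v : R) (M : 'M[R]_n) : 0 < u ->
  (forall x : 'cV[R]_n, x != 0 -> 0 < qf 1%:M x) -> M^T = M ->
  (forall x, 0 <= qf (M - u%:M) x) -> (forall x, 0 <= qf (v%:M - M) x) -> Cset u v M.
Proof.
move=> u0 q1 sM Hu Hv; split.
  split=> // x x0.
  change (0 < qf M x); have -> : M = (M - u%:M) + u%:M by rewrite subrK.
  by rewrite qfD qfS; apply: ltr_wpDl (Hu x) _; rewrite mulr_gt0 // q1.
split; split => //.
- by rewrite /Defs.symmetric linearD /= linearN /= tr_scalar_mx sM.
- by rewrite /Defs.symmetric linearD /= linearN /= tr_scalar_mx sM.
Qed.

Lemma face (R : realFieldType) n (S : 'M[R]_n -> Prop) (X Y W : 'M[R]_n) (s : R) :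
  0 < s -> S W -> W - X = s *: (X - Y) ->
  forall B, normal_cone S X B -> normal_cone S Y B.
Proof.
move=> s0 SW eW B [sB HB]; split=> // Z SZ.
have h1 : \tr (B^T *m (X - Y)) <= 0.
  by have := HB W SW; rewrite eW -scalemxAr mxtraceZ pmulr_rle0.
have -> : Z - Y = (Z - X) + (X - Y) by rewrite addrA subrK.
by rewrite mulmxDr mxtraceD; have := lerD (HB Z SZ) h1; rewrite addr0.
Qed.

Lemma reflC (R : realFieldType) n (u v : R) (Z : 'M[R]_n) : 0 < u ->
  (forall x : 'cV[R]_n, x != 0 -> 0 < qf 1%:M x) ->
  Cset u v Z -> Cset u v ((u + v)%:M - Z).
Proof.
move=> u0 q1 [[sZ _] [[_ Hu] [_ Hv]]]; apply: inC => //.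
- by rewrite linearD /= linearN /= tr_scalar_mx sZ.
- have -> : (u + v)%:M - Z - u%:M = v%:M - Z.
    by apply/matrixP => i j; rewrite !mxE; ring.
  exact: Hv.
- have -> : v%:M - ((u + v)%:M - Z) = Z - u%:M.
    by apply/matrixP => i j; rewrite !mxE; ring.
  exact: Hu.
Qed.

Lemma refl (R : realFieldType) n (u v : R) (A B : 'M[R]_n) : 0 < u ->
  (forall x : 'cV[R]_n, x != 0 -> 0 < qf 1%:M x) ->
  normal_cone (Cset u v) A B -> normal_cone (Cset u v) ((u + v)%:M - A) (- B).
Proof.
move=> u0 q1 [sB HB]; split.
  by rewrite /Defs.symmetric linearN /= sB.
move=> Z CZ; have := HB _ (reflC u0 q1 CZ).
have -> : (- B)^T *m (Z - ((u + v)%:M - A)) = B^T *m ((u + v)%:M - Z - A).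
  rewrite linearN /= mulNmx -mulmxN; congr (_ *m _).
  by apply/matrixP => i j; rewrite !mxE; ring.
done.
Qed.


Lemma K_eq (R : realFieldType) n (O : 'M[R]_n.+1) f g : f = g -> K O g -> K O f.
Proof. by move=> ->. Qed.

Theorem lemma1 (R : realFieldType) (p : nat) (u v : R)
  (hp : (1 <= p)%N) (hu : 0 < u) (huv : u <= v) (h1 : u * v = 1)
  (Omega : 'M[R]_p) (hO : Cset u v Omega) :
  forall B : 'M[R]_p,
    normal_cone (Cset u v) Omega B <-> normal_cone (Cset u v) (invmx Omega) (- B).
Proof.
case: p hp Omega hO => [//|n] _ O hO B.
have [[sO pdO] [[_ Hu] [_ Hv]]] := hO.
have uO := unitO (conj sO pdO).
have v0 : 0 < v := lt_le_trans hu huv.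
have q1 : forall x : 'cV[R]_n.+1, x != 0 -> 0 < qf 1%:M x.
  move=> x x0; have h2 : 0 < qf O x := pdO x x0.
  have : 0 <= qf (v%:M - O) x := Hv x.
  rewrite qfB qfS subr_ge0 => h3.
  by rewrite -(pmulr_rgt0 _ v0); exact: lt_le_trans h2 h3.
have K1 : K O ('X - u%:P).
  by move=> x; rewrite rmorphB /= horner_mx_X horner_mx_C; exact: Hu.
have K2 : K O (v%:P - 'X).
  by move=> x; rewrite rmorphB /= horner_mx_X horner_mx_C; exact: Hv.
have KP' := KP sO huv K1 K2.
have KX : K O 'X.
  apply: (K_eq (g := ('X - u%:P) + u%:P * 1)); first by ring.
  by apply: K_add => //; apply: K_scale; [exact: ltW | exact: K_one].
have e0 : (1 - u * v)%:P = 0 :> {poly R} by rewrite h1 subrr.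
have u0 : 0 <= u := ltW hu.
have uv0 : 0 <= u * v by rewrite h1 ler01.
set s := u ^+ 2.
have s0 : 0 < s by rewrite exprn_gt0.
set cX := (u + v)%:P - 'X.
set L1 := 'X - u%:P.
set L2 := v%:P - 'X.
set W := E O (1 + s) (s%:P * 'X - (s * (u + v))%:P).
set W' := E O (- s) ((1 + s)%:P * cX).
have eW : W - E O 1 0 = s *: (E O 1 0 - E O 0 cX).
  by rewrite !E_sub E_scale /W /cX; congr (E _ _ _); ring.
have eW' : W' - E O 0 cX = s *: (E O 0 cX - E O 1 0).
  by rewrite !E_sub E_scale /W' /cX; congr (E _ _ _); ring.
have CW : Cset u v W.
  apply: inC => //; first exact: E_sym.
    move=> x; rewrite (E_c O) E_sub; apply: E_conj => //.
    apply: (K_eq (g := (u ^+ 3)%:P * (L1 * L2) + (u ^+ 4)%:P * L2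
        + (u ^+ 2)%:P * (L2 * 'X * L2)
        + (1 - u * v)%:P * ('X - u%:P * 'X * 'X + (u * v)%:P * 'X + (u ^+ 2)%:P * 'X))).
      by rewrite /L1 /L2 /s; ring.
    rewrite e0 mul0r addr0.
    apply: K_add; first apply: K_add.
    - by apply: K_scale => //; rewrite exprn_ge0.
    - by apply: K_scale => //; rewrite exprn_ge0.
    - by apply: K_scale; [rewrite exprn_ge0 | apply: K_cong].
  move=> x; rewrite (E_c O) E_sub; apply: E_conj => //.
  apply: (K_eq (g := v%:P * (L1 * 1 * L1) + (u * v)%:P * L1 + (u ^+ 2)%:P * (L1 * L2 * L1)
      + (u ^+ 3)%:P * (L1 * L2)
      + (1 - u * v)%:P * (- 'X - (u ^+ 2)%:P * 'X))).
    by rewrite /L1 /L2 /s; ring.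
  rewrite e0 mul0r addr0.
  apply: K_add; first apply: K_add; first apply: K_add.
  - by apply: K_scale; [exact: ltW | apply: K_cong => //; exact: K_one].
  - by apply: K_scale.
  - by apply: K_scale; [rewrite exprn_ge0 | apply: K_cong].
  - by apply: K_scale => //; rewrite exprn_ge0.
have CW' : Cset u v W'.
  apply: inC => //; first exact: E_sym.
    move=> x; rewrite (E_c O) E_sub; apply: E_conj => //.
    apply: (K_eq (g := 'X * L2 * 'X + (u ^+ 2)%:P * (L1 * L2 * L1) + (u ^+ 3)%:P * (L1 * L2)
        + (1 - u * v)%:P * (- (u ^+ 2)%:P * 'X))).
      by rewrite /L1 /L2 /s /cX; ring.
    rewrite e0 mul0r addr0.
    apply: K_add; first apply: K_add.
    - by apply: K_cong.
    - by apply: K_scale; [rewrite exprn_ge0 | apply: K_cong].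
    - by apply: K_scale => //; rewrite exprn_ge0.
  move=> x; rewrite (E_c O) E_sub; apply: E_conj => //.
  apply: (K_eq (g := L1 * 'X * L1 + (u ^+ 2)%:P * ('X * L1 * 'X)
      + (1 - u * v)%:P * (u%:P * 'X * 'X))).
    by rewrite /L1 /L2 /s /cX; ring.
  rewrite e0 mul0r addr0.
  apply: K_add.
  - by apply: K_cong.
  - by apply: K_scale; [rewrite exprn_ge0 | apply: K_cong].
have fXY := face s0 CW eW.
have fYX := face s0 CW' eW'.
have eJ : invmx O = E O 1 0 by rewrite /E scale1r rmorph0 addr0.
have eY : (u + v)%:M - O = E O 0 cX.
  by rewrite /E scale0r add0r /cX rmorphB /= horner_mx_C horner_mx_X.
split=> HB.
  by rewrite eJ; apply: fYX; rewrite -eY; exact: refl.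
rewrite eJ in HB; have := refl hu q1 (fXY _ HB).
by rewrite opprK -eY subKr.
Qed.
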